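(* Let $\mathcal G$ be a tree on $n\ge2$ nodes (so it has $n-1$ edges), with oriented incidence matrix $D_\tau\in\mathbb R^{n\times(n-1)}$, edge-weight matrix $W=\mathrm{diag}(w_1,\dots,w_{n-1})$, $w_l>0$, and time-scale matrix $E=\mathrm{diag}(\epsilon_1,\dots,\epsilon_n)$, $\epsilon_i>0$; let $L_{e,s}^\tau=D_\tau^TE^{-1}D_\tau$ and $\sigma_w,\sigma_v$ real scalars. Consider $$\tilde\Sigma_\tau(s)=\big(sI+L_{e,s}^\tau W\big)^{-1}\begin{bmatrix}\sigma_wD_\tau^TE^{-1/2} & -\sigma_vL_{e,s}^\tau W^{1/2}\end{bmatrix},\qquad \Pi_\tau(s)=W^{1/2}\tilde\Sigma_\tau(s).$$ Then $$\|\tilde\Sigma_\tau\|_\infty^2=\bar\sigma\big(\sigma_w^2(WL_{e,s}^\tau W)^{-1}+\sigma_v^2W^{-1}\big),\qquad \|\Pi_\tau\|_\infty^2=\sigma_w^2\,\bar\sigma\big((W^{1/2}L_{e,s}^\tau W^{1/2})^{-1}\big)+\sigma_v^2.$$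
   Context: The incidence matrix of a graph with an arbitrary orientation of each edge has entry $1$ in row $i$, column $l$ if node $i$ is the initial node of edge $l$, $-1$ if it is the terminal node, and $0$ otherwise. Powers of positive diagonal matrices are taken entrywise. For a stable transfer matrix $\Phi(s)$, $\|\Phi\|_\infty=\sup_{\omega\in\mathbb R}\bar\sigma(\Phi(j\omega))$ where $\bar\sigma$ is the largest singular value. (This is the general edge-consensus model with $R=I$, which is the case when the graph is its own spanning tree.) *)

(* Defs.v *)
From HB Require Import structures.
From mathcomp Require Import all_boot all_order all_algebra.
From mathcomp Require Import all_classical all_reals ereal.
From mathcomp Require Import complex.
Set Implicit Arguments. Unset Strict Implicit. Unset Printing Implicit Defensive.
Import Order.TTheory GRing.Theory Num.Theory.
Local Open Scope ring_scope.
Local Open Scope classical_set_scope.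

(* Oriented graph on nodes 'I_n with m edges, edge l goes from (e l).1
   (initial node) to (e l).2 (terminal node). *)

Definition adj n m (e : 'I_m -> 'I_n * 'I_n) : rel 'I_n :=
  fun i j => [exists l : 'I_m, ((e l).1 == i) && ((e l).2 == j)
                            || ((e l).1 == j) && ((e l).2 == i)].

(* e describes (an arbitrary orientation of) a tree on n nodes with m = n-1
   edges: simple (no loops, no parallel edges) and connected. *)
Definition is_tree n (e : 'I_n.-1 -> 'I_n * 'I_n) : Prop :=
  [/\ (forall l, (e l).1 != (e l).2),
      (forall l k, l != k -> (e l != e k) /\ (e l != ((e k).2, (e k).1)))
    & (forall i j : 'I_n, connect (adj e) i j)].

Definition incidence (R : pzRingType) n m (e : 'I_m -> 'I_n * 'I_n)
  : 'M[R]_(n, m) :=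
  \matrix_(i, l) (if (e l).1 == i then 1 else if (e l).2 == i then -1 else 0).

Definition diagm (R : realType) k (d : 'I_k -> R) : 'M[R]_k :=
  diag_mx (\row_i d i).
Definition diag_sqrt (R : realType) k (d : 'I_k -> R) : 'M[R]_k :=
  diag_mx (\row_i Num.sqrt (d i)).
Definition diag_inv (R : realType) k (d : 'I_k -> R) : 'M[R]_k :=
  diag_mx (\row_i (d i)^-1).
Definition diag_invsqrt (R : realType) k (d : 'I_k -> R) : 'M[R]_k :=
  diag_mx (\row_i (Num.sqrt (d i))^-1).

Local Open Scope complex_scope.

Definition cmx (R : rcfType) p q (A : 'M[R]_(p, q)) : 'M[R[i]]_(p, q) :=
  map_mx (fun x => x%:C) A.

Definition ctr (R : rcfType) p q (A : 'M[R[i]]_(p, q)) : 'M[R[i]]_(q, p) :=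
  (map_mx (fun z : R[i] => z^*) A)^T.

(* largest singular value: square root of the largest eigenvalue of A^H A
   (the eigenvalues of A^H A are real and nonnegative) *)
Definition sigma_bar (R : realType) p q (A : 'M[R[i]]_(p, q)) : R :=
  Num.sqrt (sup [set x : R | eigenvalue (ctr A *m A) x%:C]).

Definition hinf_norm (R : realType) p q (Phi : R[i] -> 'M[R[i]]_(p, q))
  : \bar R :=
  ereal_sup [set (sigma_bar (Phi (Complex 0 w)))%:E | w in [set: R]].

Definition edge_lap (R : realType) n (e : 'I_n.-1 -> 'I_n * 'I_n)
  (eps : 'I_n -> R) : 'M[R]_n.-1 :=
  (incidence R e)^T *m diag_inv eps *m incidence R e.

Definition Sigma_tau (R : realType) n (e : 'I_n.-1 -> 'I_n * 'I_n)
  (w : 'I_n.-1 -> R) (eps : 'I_n -> R) (sw sv : R) (s : R[i])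
  : 'M[R[i]]_(n.-1, n + n.-1) :=
  invmx (s%:M + cmx (edge_lap e eps *m diagm w)) *m
  row_mx (cmx (sw *: ((incidence R e)^T *m diag_invsqrt eps)))
         (cmx ((- sv) *: (edge_lap e eps *m diag_sqrt w))).

Definition Pi_tau (R : realType) n (e : 'I_n.-1 -> 'I_n * 'I_n)
  (w : 'I_n.-1 -> R) (eps : 'I_n -> R) (sw sv : R) (s : R[i])
  : 'M[R[i]]_(n.-1, n + n.-1) :=
  cmx (diag_sqrt w) *m Sigma_tau e w eps sw sv s.

(* Main.v *)
Require Import Defs.
From HB Require Import structures.
From mathcomp Require Import all_boot all_order all_algebra.
From mathcomp Require Import all_classical all_reals ereal.
From mathcomp Require Import complex.
Import Order.TTheory GRing.Theory Num.Theory Num.Def.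
Local Open Scope ring_scope.
Local Open Scope classical_set_scope.
From mathcomp Require Import zify.
Set Implicit Arguments. Unset Strict Implicit. Unset Printing Implicit Defensive.

Lemma ctrE (R : rcfType) p q (A : 'M[R[i]]_(p,q)) i j : ctr A i j = conjc (A j i).
Proof. by rewrite /ctr !mxE. Qed.

Lemma ctrK (R : rcfType) p q (A : 'M[R[i]]_(p,q)) : ctr (ctr A) = A.
Proof. by apply/matrixP => i j; rewrite !ctrE conjcK. Qed.

Lemma ctrM (R : rcfType) p q r (A : 'M[R[i]]_(p,q)) (B : 'M[R[i]]_(q,r)) :
  ctr (A *m B) = ctr B *m ctr A.
Proof.
apply/matrixP => i j; rewrite !mxE rmorph_sum; apply: eq_bigr => k _.
by rewrite !ctrE rmorphM mulrC.
Qed.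

Lemma ctrD (R : rcfType) p q (A B : 'M[R[i]]_(p,q)) : ctr (A + B) = ctr A + ctr B.
Proof. by apply/matrixP => i j; rewrite !mxE rmorphD. Qed.

Lemma ctrN (R : rcfType) p q (A : 'M[R[i]]_(p,q)) : ctr (- A) = - ctr A.
Proof. by apply/matrixP => i j; rewrite !mxE rmorphN. Qed.

Lemma ctrZ (R : rcfType) p q a (A : 'M[R[i]]_(p,q)) : ctr (a *: A) = conjc a *: ctr A.
Proof. by apply/matrixP => i j; rewrite !mxE rmorphM. Qed.

Lemma ctr_cmx (R : rcfType) p q (A : 'M[R]_(p,q)) : ctr (cmx A) = cmx A^T.
Proof. by apply/matrixP => i j; rewrite ctrE !mxE conjc_real. Qed.

Lemma ctr_scalar (R : rcfType) k (a : R[i]) : ctr (a%:M : 'M_k) = (conjc a)%:M.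
Proof.
by apply/matrixP => i j; rewrite ctrE !mxE rmorphMn eq_sym.
Qed.

Lemma ctr_inv (R : rcfType) k (A : 'M[R[i]]_k) : ctr (invmx A) = invmx (ctr A).
Proof. by rewrite /ctr (map_invmx (conjc : {rmorphism R[i] -> R[i]})) trmx_inv. Qed.

Lemma ctr_herm (R : rcfType) k (A : 'M[R[i]]_k) : ctr A = A -> A \is hermsymmx.
Proof.
move=> hA; rewrite is_hermitianmxE expr0 scale1r.
apply/eqP; rewrite -[LHS]hA; apply/matrixP => i j; rewrite ctrE !mxE //.
Qed.

Definition hf (R : rcfType) k (u v : 'rV[R[i]]_k) : R[i] := (u *m ctr v) 0 0.
Definition bf (R : rcfType) k (G : 'M[R[i]]_k) (u v : 'rV[R[i]]_k) : R[i] :=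
  (u *m G *m ctr v) 0 0.

Lemma hf_sum (R : rcfType) k (u : 'rV[R[i]]_k) :
  hf u u = \sum_j u 0 j * conjc (u 0 j).
Proof. by rewrite /hf mxE; apply: eq_bigr => j _; rewrite ctrE. Qed.

Lemma hf_ge0 (R : rcfType) k (u : 'rV[R[i]]_k) : 0 <= hf u u.
Proof. by rewrite hf_sum; apply: sumr_ge0 => j _; apply: mulcJ_ge0. Qed.

Lemma hf_gt0 (R : rcfType) k (u : 'rV[R[i]]_k) : u != 0 -> 0 < hf u u.
Proof.
move=> u0; rewrite lt_def hf_ge0 andbT; apply: contra u0 => /eqP h.
apply/eqP/rowP => j; rewrite mxE.
have : u 0 j * conjc (u 0 j) = 0.
  apply: (@psumr_eq0P _ _ xpredT (fun j => u 0 j * conjc (u 0 j))) => //.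
    by move=> l _; apply: mulcJ_ge0.
  by rewrite -hf_sum h.
by move/eqP; rewrite mulf_eq0 conjc_eq0 orbb => /eqP.
Qed.

Lemma ctr_tc (R : rcfType) p q (A : 'M[R[i]]_(p,q)) : ctr A = map_mx conjC (A ^T).
Proof. by apply/matrixP => i j; rewrite !mxE. Qed.

Definition lam (R : realType) k (Q : 'M[R[i]]_k) : R :=
  sup [set x : R | eigenvalue Q (x%:C)%C].

Lemma lam_eq (R : realType) k (Q : 'M[R[i]]_k) (L : R) :
  (exists2 v : 'rV_k, v != 0 & v *m Q = (L%:C)%C *: v) ->
  (forall mu : R, eigenvalue Q (mu%:C)%C -> mu <= L) -> lam Q = L.
Proof.
move=> [v v0 hv] hub.
have inS : [set x : R | eigenvalue Q (x%:C)%C] L by apply/eigenvalueP; exists v.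
apply/le_anti/andP; split.
  apply: ge_sup; first by exists L.
  by move=> x /hub.
by apply: ub_le_sup => //; exists L => x /hub.
Qed.

Lemma spectral_facts (R : realType) k (Q : 'M[R[i]]_k) : (0 < k)%N -> ctr Q = Q ->
  (exists2 v : 'rV_k, v != 0 & v *m Q = ((lam Q)%:C)%C *: v) /\
  (forall x : 'rV_k, bf Q x x <= ((lam Q)%:C)%C * hf x x).
Proof.
move=> kpos hQ.
have hQh := ctr_herm hQ.
set U := spectralmx Q; set d := spectral_diag Q.
have Qe : Q = invmx U *m diag_mx d *m U.
  by apply/orthomx_spectralP/hermitian_normalmx.
have Uu : U \is unitarymx := spectral_unitarymx Q.
have UU : U *m ctr U = 1%:M by rewrite ctr_tc; apply/unitarymxP.
have Uinv : invmx U = ctr U by rewrite invmx_unitary // ctr_tc.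
have UtU : ctr U *m U = 1%:M by rewrite -Uinv mulVmx // unitarymx_unit.
have dreal : forall j, d 0 j = ((complex.Re (d 0 j))%:C)%C.
  move=> j; have /mxOverP /(_ 0 j) hr := hermitian_spectral_diag_real hQh.
  by rewrite RRe_real.
pose F := fun j => complex.Re (d 0 j).
have [i0 _ Hi0] := @arg_maxP _ R 'I_k (Ordinal kpos) xpredT F isT.
have eigj : forall j, row j U *m Q = d 0 j *: row j U.
  move=> j; rewrite Qe Uinv !mulmxA -row_mul UU row1.
  by rewrite -rowE row_diag_mx -scalemxAl -rowE.
have rowU0 : forall j, row j U != 0.
  move=> j; apply/eqP => h.
  have : row j (U *m ctr U) = 0 by rewrite row_mul h mul0mx.
  rewrite UU row1 => /matrixP /(_ 0 j); rewrite !mxE !eqxx /= => /eqP.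
  by rewrite oner_eq0.
have QU : Q *m ctr U = ctr U *m diag_mx d.
  by rewrite Qe Uinv -!mulmxA UU mulmx1.
have lamE : lam Q = F i0.
  apply: lam_eq.
    by exists (row i0 U) => //; rewrite eigj -dreal.
  move=> mu /eigenvalueP [v hv v0].
  set y := v *m ctr U.
  have hy : y *m diag_mx d = (mu%:C)%C *: y.
    by rewrite /y -mulmxA -QU mulmxA hv scalemxAl.
  have y0 : y != 0.
    apply: contra v0 => /eqP y0; apply/eqP.
    by rewrite -[v]mulmx1 -UtU mulmxA -/y y0 mul0mx.
  have [j yj] : exists j, y 0 j != 0.
    apply/existsP; move: y0; apply: contraNT; rewrite negb_exists => /forallP h.
    by apply/eqP/rowP => j; move: (h j); rewrite negbK => /eqP ->; rewrite mxE.
  clearbody y.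
  have := congr1 (fun M : 'rV_k => M 0 j) hy; rewrite mul_mx_diag !mxE mulrC.
  by move=> /(mulIf yj); rewrite dreal => -[<-]; apply: Hi0.
split; first by exists (row i0 U) => //; rewrite eigj lamE -dreal.
move=> x; set y := x *m ctr U.
have e1 : bf Q x x = (y *m diag_mx d *m ctr y) 0 0.
  by rewrite /bf /y ctrM ctrK Qe Uinv !mulmxA.
have e2 : hf x x = (y *m ctr y) 0 0.
  by rewrite /hf /y ctrM ctrK -mulmxA [ctr U *m _]mulmxA UtU mul1mx.
rewrite e1 e2 !mxE mulr_sumr; apply: ler_sum => j _.
rewrite mul_mx_diag !mxE [_ * d 0 j]mulrC -mulrA.
apply: ler_wpM2r; first exact: mulcJ_ge0.
by rewrite dreal lecR lamE; apply: Hi0.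
Qed.

Lemma bf_eig (R : rcfType) k (Q : 'M[R[i]]_k) v a :
  v *m Q = a *: v -> bf Q v v = a * hf v v.
Proof. by move=> h; rewrite /bf /hf h -scalemxAl mxE. Qed.

Lemma bf_XXH (R : rcfType) k m (X : 'M[R[i]]_(k, m)) x :
  bf (X *m ctr X) x x = hf (x *m X) (x *m X).
Proof. by rewrite /bf /hf ctrM !mulmxA. Qed.

Lemma ctr_XXH (R : rcfType) k m (X : 'M[R[i]]_(k, m)) : ctr (X *m ctr X) = X *m ctr X.
Proof. by rewrite ctrM ctrK. Qed.

Lemma ctr_XHX (R : rcfType) k m (X : 'M[R[i]]_(k, m)) : ctr (ctr X *m X) = ctr X *m X.
Proof. by rewrite ctrM ctrK. Qed.
Lemma eig_le_lam (R : realType) k (Q : 'M[R[i]]_k) mu : (0 < k)%N -> ctr Q = Q ->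
  eigenvalue Q (mu%:C)%C -> mu <= lam Q.
Proof.
move=> kp hQ /eigenvalueP [v hv v0].
have [_ ray] := spectral_facts kp hQ.
have := ray v; rewrite (bf_eig hv) ler_pM2r; last exact: hf_gt0.
by rewrite lecR.
Qed.

Lemma lam_le (R : realType) k (P Q : 'M[R[i]]_k) : (0 < k)%N -> ctr P = P -> ctr Q = Q ->
  (forall x, bf P x x <= bf Q x x) -> lam P <= lam Q.
Proof.
move=> kp hP hQ hPQ.
have [[v v0 hv] _] := spectral_facts kp hP.
have [_ ray] := spectral_facts kp hQ.
have := le_trans (hPQ v) (ray v); rewrite (bf_eig hv) ler_pM2r; last exact: hf_gt0.
by rewrite lecR.
Qed.

Lemma lam_ge0 (R : realType) k (Q : 'M[R[i]]_k) : (0 < k)%N -> ctr Q = Q ->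
  (forall x, 0 <= bf Q x x) -> 0 <= lam Q.
Proof.
move=> kp hQ hpos.
have [[v v0 hv] _] := spectral_facts kp hQ.
have := hpos v; rewrite (bf_eig hv) pmulr_lge0; last exact: hf_gt0.
by rewrite ler0c.
Qed.

Lemma lam_AHA_le (R : realType) p q (A : 'M[R[i]]_(p, q)) : (0 < p)%N -> (0 < q)%N ->
  lam (ctr A *m A) <= lam (A *m ctr A).
Proof.
move=> pp qp.
have [[v v0 hv] _] := spectral_facts qp (ctr_XHX A).
set u := v *m ctr A.
case: (eqVneq u 0) => [u0|u0].
  have : ((lam (ctr A *m A))%:C)%C *: v = 0 by rewrite -hv mulmxA -/u u0 mul0mx.
  move/eqP; rewrite scalemx_eq0 (negPf v0) orbF => /eqP [->].
  apply: lam_ge0; first exact: pp; first exact: ctr_XXH.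
  by move=> x; rewrite bf_XXH; apply: hf_ge0.
apply: eig_le_lam pp (ctr_XXH A) _; apply/eigenvalueP; exists u; last exact: u0.
by rewrite /u mulmxA -(mulmxA v) hv -scalemxAl.
Qed.

Lemma lam_AHA (R : realType) p q (A : 'M[R[i]]_(p, q)) : (0 < p)%N -> (0 < q)%N ->
  lam (ctr A *m A) = lam (A *m ctr A).
Proof.
move=> pp qp; apply/le_anti/andP; split; first exact: lam_AHA_le.
by have := lam_AHA_le (ctr A) qp pp; rewrite ctrK.
Qed.
Lemma lam_sq (R : realType) k (B : 'M[R[i]]_k) : (0 < k)%N -> ctr B = B ->
  (forall x, 0 <= bf B x x) -> lam (ctr B *m B) = lam B ^+ 2.
Proof.
move=> kp hB hpos.
have [[v v0 hv] _] := spectral_facts kp hB.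
apply: lam_eq.
  exists v; first exact: v0.
  by rewrite hB mulmxA hv -scalemxAl hv scalerA -rmorphM expr2.
move=> mu /eigenvalueP [w hw w0].
have mu0 : 0 <= mu.
  have := bf_XXH (ctr B) w; rewrite ctrK (bf_eig hw) => e.
  have : 0 <= (mu%:C)%C * hf w w by rewrite e; apply: hf_ge0.
  by rewrite pmulr_lge0 ?ler0c //; exact: hf_gt0.
set r := Num.sqrt mu.
have r0 : 0 <= r by apply: sqrtr_ge0.
have rr : r * r = mu by rewrite -expr2 sqr_sqrtr.
have lam0 : 0 <= lam B by apply: lam_ge0.
set z := w *m B + (r%:C)%C *: w.
have hz : z *m B = (r%:C)%C *: z.
  rewrite /z mulmxDl -scalemxAl -mulmxA -[B *m B]/(B *m B).
  rewrite -{1}hB hw scalerDr scalerA -rmorphM rr addrC.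
  done.
case: (eqVneq z 0) => [z0|z0]; last first.
  have : r <= lam B.
    apply: eig_le_lam kp hB _; apply/eigenvalueP; exists z; [exact: hz | exact: z0].
  move=> rl; rewrite -rr expr2; exact: ler_pM.
have wB : w *m B = - ((r%:C)%C *: w).
  by apply/eqP; rewrite -addr_eq0; apply/eqP; exact: z0.
have := hpos w; rewrite (bf_eig (a := - (r%:C)%C) _); last by rewrite wB scaleNr.
rewrite pmulr_lge0; last exact: hf_gt0.
rewrite -rmorphN ler0c oppr_ge0 => rle.
have -> : mu = 0 by rewrite -rr (@le_anti _ _ r 0); [rewrite mulr0 | rewrite rle r0].
exact: sqr_ge0.
Qed.
Lemma lam_affine (R : realType) k (Q : 'M[R[i]]_k) (a b : R) : (0 < k)%N -> ctr Q = Q ->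
  0 <= a -> lam ((a%:C)%C *: Q + ((b%:C)%C)%:M) = a * lam Q + b.
Proof.
move=> kp hQ a0.
have [[v v0 hv] _] := spectral_facts kp hQ.
apply: lam_eq.
  exists v; first exact: v0.
  by rewrite mulmxDr -scalemxAr hv mul_mx_scalar scalerA -rmorphM -scalerDl -rmorphD.
move=> mu /eigenvalueP [w hw w0].
move: hw; rewrite mulmxDr -scalemxAr mul_mx_scalar => hw.
have hw' : (a%:C)%C *: (w *m Q) = ((mu - b)%:C)%C *: w.
  by rewrite rmorphB scalerBl -hw addrK.
case: (eqVneq a 0) => [a00|an0].
  move: hw'; rewrite a00 scale0r => /esym/eqP; rewrite scalemx_eq0 (negPf w0) orbF.
  move=> /eqP [] /eqP; rewrite subr_eq0 => /eqP ->; rewrite mul0r add0r.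
  exact: lexx.
have apos : 0 < a by rewrite lt_def an0 a0.
have aC : (a%:C)%C != 0 by apply: contra an0 => /eqP [->].
have : (mu - b) / a <= lam Q.
  apply: eig_le_lam kp hQ _; apply/eigenvalueP; exists w; last exact: w0.
  rewrite -[w *m Q](scalerK aC) hw' scalerA rmorphM fmorphV mulrC.
  done.
rewrite ler_pdivrMr; last exact: apos.
by rewrite -lerBlDr mulrC.
Qed.

Lemma sigma_bar_psd (R : realType) k (B : 'M[R[i]]_k) : (0 < k)%N -> ctr B = B ->
  (forall x, 0 <= bf B x x) -> sigma_bar B = lam B.
Proof.
move=> kp hB hpos.
rewrite /sigma_bar -/(lam _) lam_sq //.
by rewrite sqrtr_sqr ger0_norm //; apply: lam_ge0.
Qed.
Lemma bfDl (R : rcfType) k (G : 'M[R[i]]_k) u1 u2 v :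
  bf G (u1 + u2) v = bf G u1 v + bf G u2 v.
Proof. by rewrite /bf !mulmxDl mxE. Qed.

Lemma bfDr (R : rcfType) k (G : 'M[R[i]]_k) u v1 v2 :
  bf G u (v1 + v2) = bf G u v1 + bf G u v2.
Proof. by rewrite /bf ctrD mulmxDr mxE. Qed.

Lemma bf_conj (R : rcfType) k (G : 'M[R[i]]_k) u v : ctr G = G ->
  bf G u v = conjc (bf G v u).
Proof.
move=> hG; rewrite /bf -ctrE !ctrM ctrK hG mulmxA //.
Qed.

Lemma bfZl (R : rcfType) k (G : 'M[R[i]]_k) c u v : bf G (c *: u) v = c * bf G u v.
Proof. by rewrite /bf -!scalemxAl mxE. Qed.

Lemma conjcM' (R : rcfType) (x y : R[i]) : conjc (x * y) = conjc x * conjc y.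
Proof. exact: rmorphM. Qed.

Lemma key_ineq (R : rcfType) k (L W G : 'M[R[i]]_k) (a b om : R) (u y : 'rV_k) :
  ctr L = L -> ctr W = W -> W \in unitmx ->
  G = (a%:C)%C *: L + (b%:C)%C *: (L *m W *m L) ->
  ctr G = G ->
  (forall x, 0 <= bf G x x) ->
  u *m ((Complex 0 om)%:M + L *m W) = y *m (L *m W) ->
  bf G u u <= bf G y y.
Proof.
move=> hL hW Wu hGe hG hpos huy.
set s := Complex 0 om.
set d := y - u.
have hd : d *m (L *m W) = s *: u.
  by rewrite /d mulmxBl -huy mulmxDr mul_mx_scalar addrK.
have hdL : d *m L = s *: (u *m invmx W).
  by rewrite scalemxAl -hd mulmxA mulmxK.
have dG : d *m G = s *: ((a%:C)%C *: (u *m invmx W) + (b%:C)%C *: (u *m L)).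
  rewrite hGe mulmxDr -!scalemxAr !mulmxA -(mulmxA d) hd hdL.
  by rewrite -!scalemxAl !scalerDr !scalerA mulrC [_ * s]mulrC.
set r := (a%:C)%C * bf (invmx W) u u + (b%:C)%C * bf L u u.
have bdu : bf G d u = s * r.
  rewrite /bf dG -!scalemxAl mxE; congr (_ * _).
  by rewrite mulmxDl -!scalemxAl /r /bf !mxE.
have hWi : ctr (invmx W) = invmx W by rewrite ctr_inv hW.
have rr : conjc r = r.
  rewrite /r rmorphD !rmorphM /= !oppr0 -(bf_conj _ _ hWi) -(bf_conj _ _ hL).
  done.
have sc : conjc s = - s by apply/eqP; rewrite eq_complex /= oppr0 !eqxx.
have yd : y = u + d by rewrite /d addrC subrK.
clearbody d; rewrite yd.
rewrite !bfDl !bfDr (bf_conj u d hG) bdu conjcM' sc rr.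
rewrite mulNr addrA subrK lerDl; apply: hpos.
Qed.
Lemma inc_row (R : realType) n (e : 'I_n.-1 -> 'I_n * 'I_n) (u : 'rV[R]_n) l :
  (e l).1 != (e l).2 ->
  (u *m incidence R e) 0 l = u 0 (e l).1 - u 0 (e l).2.
Proof.
move=> ne.
rewrite mxE (bigD1 (e l).1) //= mxE eqxx mulr1 (bigD1 (e l).2) /=; last first.
  by rewrite eq_sym.
rewrite mxE (negPf ne) eqxx mulrN1 big1 ?addr0 //.
move=> i /andP [h1 h2]; rewrite mxE eq_sym (negPf h1) eq_sym (negPf h2) mulr0 //.
Qed.

Lemma tree_ker (R : realType) n (e : 'I_n.-1 -> 'I_n * 'I_n) (u : 'rV[R]_n) :
  is_tree e -> u *m incidence R e = 0 -> forall i j, u 0 i = u 0 j.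
Proof.
move=> [t1 _ t3] hu.
have hadj : forall i j, adj e i j -> u 0 i = u 0 j.
  move=> i j /existsP [l /orP [/andP [/eqP h1 /eqP h2]|/andP [/eqP h1 /eqP h2]]].
    have := inc_row u (t1 l); rewrite hu mxE h1 h2 => /eqP; rewrite eq_sym subr_eq0.
    by move/eqP.
  have := inc_row u (t1 l); rewrite hu mxE h1 h2 => /eqP; rewrite eq_sym subr_eq0.
  by move/eqP.
move=> i j; have /connectP [p hp ->] := t3 i j.
elim: p i hp => [|x p IH] i //= /andP [h1 h2].
by rewrite (hadj _ _ h1) (IH _ h2).
Qed.

Lemma tree_rank (R : realType) n (e : 'I_n.-1 -> 'I_n * 'I_n) :
  (2 <= n)%N -> is_tree e -> row_free (incidence R e)^T.
Proof.
move=> n2 tr.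
have i0 : 'I_n by exists 0%N; apply: leq_trans n2.
have hk : (kermx (incidence R e) <= (const_mx 1 : 'rV[R]_n))%MS.
  apply/row_subP => r; set u := row r _.
  have hu : u *m incidence R e = 0.
    by apply/sub_kermxP; apply: submx_trans (row_sub _ _) _.
  clearbody u; apply/sub_rVP; exists (u 0 i0); apply/rowP => j.
  by rewrite !mxE mulr1 (tree_ker tr hu j i0).
have := mxrankS hk; rewrite mxrank_ker => h1.
have h2 := rank_leq_row (const_mx 1 : 'rV[R]_n).
rewrite /row_free mxrank_tr eqn_leq rank_leq_col /=.
have := leq_trans h1 h2; lia.
Qed.
Lemma cmxM (R : rcfType) m n p (A : 'M[R]_(m,n)) (B : 'M[R]_(n,p)) :
  cmx (A *m B) = cmx A *m cmx B.
Proof. exact: map_mxM. Qed.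
Lemma cmxD (R : rcfType) m n (A B : 'M[R]_(m,n)) : cmx (A + B) = cmx A + cmx B.
Proof. exact: map_mxD. Qed.
Lemma cmxZ (R : rcfType) m n a (A : 'M[R]_(m,n)) : cmx (a *: A) = (a%:C)%C *: cmx A.
Proof. exact: map_mxZ. Qed.
Lemma cmx_inv (R : rcfType) k (A : 'M[R]_k) : cmx (invmx A) = invmx (cmx A).
Proof. exact: map_invmx. Qed.
Lemma cmx_unit (R : rcfType) k (A : 'M[R]_k) : (cmx A \in unitmx) = (A \in unitmx).
Proof. exact: map_unitmx. Qed.
Lemma cmx_scalar (R : rcfType) k (a : R) : cmx (a%:M : 'M_k) = ((a%:C)%C)%:M.
Proof. exact: map_scalar_mx. Qed.
Lemma cmx_rank (R : rcfType) m n (A : 'M[R]_(m,n)) : \rank (cmx A) = \rank A.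
Proof. exact: mxrank_map. Qed.
Lemma cmxT (R : rcfType) m n (A : 'M[R]_(m,n)) : cmx A^T = (cmx A)^T.
Proof. by apply/matrixP => i j; rewrite !mxE. Qed.
Lemma cmx_row (R : rcfType) m n1 n2 (A : 'M[R]_(m,n1)) (B : 'M[R]_(m,n2)) :
  cmx (row_mx A B) = row_mx (cmx A) (cmx B).
Proof. exact: map_row_mx. Qed.

Lemma diag_tr (R : realType) k (d : 'I_k -> R) :
  [/\ (diagm d)^T = diagm d, (diag_sqrt d)^T = diag_sqrt d,
      (diag_inv d)^T = diag_inv d & (diag_invsqrt d)^T = diag_invsqrt d].
Proof. by split; rewrite tr_diag_mx. Qed.

Lemma diag_facts (R : realType) k (d : 'I_k -> R) : (forall i, 0 < d i) ->
  [/\ diag_sqrt d *m diag_sqrt d = diagm d,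
      diag_invsqrt d *m diag_invsqrt d = diag_inv d,
      diagm d *m diag_inv d = 1%:M &
      diag_sqrt d *m diag_invsqrt d = 1%:M].
Proof.
move=> hd; rewrite /diagm /diag_sqrt /diag_inv /diag_invsqrt; split; rewrite mulmx_diag.
- congr diag_mx; apply/rowP => i; rewrite !mxE -expr2 sqr_sqrtr // ltW //.
- congr diag_mx; apply/rowP => i; rewrite !mxE -invfM -expr2 sqr_sqrtr // ltW //.
- rewrite -diag_const_mx; congr diag_mx; apply/rowP => i; rewrite !mxE mulfV // gt_eqF //.
- rewrite -diag_const_mx; congr diag_mx; apply/rowP => i; rewrite !mxE mulfV // gt_eqF // sqrtr_gt0 //.
Qed.

Lemma unit_inv_eq (R : fieldType) k (A B : 'M[R]_k) : A *m B = 1%:M ->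
  A \in unitmx /\ invmx A = B.
Proof.
move=> h; have [Au _] := mulmx1_unit h; split => //.
by rewrite -[invmx A]mulmx1 -h mulmxA mulVmx // mul1mx.
Qed.
Lemma invmxM (R : fieldType) k (A B : 'M[R]_k) : A \in unitmx -> B \in unitmx ->
  invmx (A *m B) = invmx B *m invmx A.
Proof.
move=> Au Bu; apply: (unit_inv_eq _).2.
by rewrite -mulmxA (mulmxA B) mulmxV // mul1mx mulmxV.
Qed.

Lemma R1 (R : realType) N (L W Wi : 'M[R]_N) (a b : R) :
  W \in unitmx -> L \in unitmx -> Wi = invmx W -> L^T = L -> W^T = W ->
  invmx (L *m W) *m (a *: L + b *: (L *m W *m L)) *m (invmx (L *m W))^T
   = a *: invmx (W *m L *m W) + b *: Wi.
Proof.
move=> Wu Lu -> hL hW.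
have LWu : L *m W \in unitmx by rewrite unitmx_mul Lu Wu.
have WLu : W *m L \in unitmx by rewrite unitmx_mul Lu Wu.
rewrite trmx_inv trmx_mul hL hW !invmxM //.
rewrite mulmxDr mulmxDl -!scalemxAr -!scalemxAl.
congr (_ + _); congr (_ *: _).
  by rewrite -!mulmxA (mulmxA L) mulmxV // mul1mx.
by rewrite !mulmxA -(mulmxA (invmx W)) mulVmx // mulmx1 mulVmx // mul1mx mulmxV // mul1mx.
Qed.

Lemma R2 (R : realType) N (L W Wh Wi : 'M[R]_N) (a b : R) :
  Wh \in unitmx -> L \in unitmx -> Wh *m Wh = W -> Wi = invmx W -> Wh^T = Wh ->
  Wh *m (a *: invmx (W *m L *m W) + b *: Wi) *m Wh^T
   = a *: invmx (Wh *m L *m Wh) + b%:M.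
Proof.
move=> Whu Lu hWW -> hWh.
have Wu : W \in unitmx by rewrite -hWW unitmx_mul Whu.
have WLu : W *m L \in unitmx by rewrite unitmx_mul Lu Wu.
have WhLu : Wh *m L \in unitmx by rewrite unitmx_mul Lu Whu.
rewrite hWh !invmxM // mulmxDr mulmxDl -!scalemxAr -!scalemxAl.
rewrite -hWW !invmxM //.
congr (_ + _).
  congr (_ *: _).
  by rewrite !mulmxA mulmxV // mul1mx -!mulmxA mulVmx // mulmx1.
by rewrite !mulmxA mulmxV // mul1mx mulVmx // scalemx1.
Qed.
Lemma KKT (R : realType) n m (D : 'M[R]_(n,m)) (Eh Ei : 'M[R]_n) (Wh W : 'M[R]_m) (sw sv : R) :
  Eh *m Eh^T = Ei -> Wh *m Wh^T = W -> (D^T *m Ei *m D)^T = D^T *m Ei *m D ->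
  row_mx (sw *: (D^T *m Eh)) ((-sv) *: (D^T *m Ei *m D *m Wh)) *m
  (row_mx (sw *: (D^T *m Eh)) ((-sv) *: (D^T *m Ei *m D *m Wh)))^T
  = sw^+2 *: (D^T *m Ei *m D) + sv^+2 *: (D^T *m Ei *m D *m W *m (D^T *m Ei *m D)).
Proof.
move=> hE hW hL.
rewrite tr_row_mx mul_row_col !linearZ /= -!scalemxAl !scalerA.
rewrite mulrNN -!expr2; congr (_ *: _ + _ *: _).
  by rewrite trmx_mul trmxK -!mulmxA (mulmxA Eh) hE !mulmxA.
by rewrite trmx_mul hL -!mulmxA (mulmxA Wh) hW !mulmxA.
Qed.

Lemma hinf_max (R : realType) p q (Phi : R[i] -> 'M[R[i]]_(p,q)) :
  (forall om, sigma_bar (Phi (Complex 0 om)) <= sigma_bar (Phi (Complex 0 0))) ->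
  hinf_norm Phi = (sigma_bar (Phi (Complex 0 0)))%:E.
Proof.
move=> h; apply/le_anti/andP; split.
  apply: ge_ereal_sup => _ [om _ <-]; rewrite lee_fin; exact: h.
apply: le_ereal_sup_tmp; exists (sigma_bar (Phi (Complex 0 0)))%:E => //.
Qed.
Lemma entry_lin (R : rcfType) (a : R[i]) (A B : 'M[R[i]]_1) :
  (a *: A + B) 0 0 = a * A 0 0 + B 0 0.
Proof. by rewrite !mxE. Qed.

Lemma conjcD' (R : rcfType) (x y : R[i]) : conjc (x + y) = conjc x + conjc y.
Proof. exact: rmorphD. Qed.

Lemma sigma_barE (R : realType) p q (A : 'M[R[i]]_(p,q)) :
  sigma_bar A = Num.sqrt (lam (ctr A *m A)).
Proof. by []. Qed.

Lemma conj_imag (R : rcfType) (om : R) : conjc (Complex 0 om) = - Complex 0 om.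
Proof. by apply/eqP; rewrite eq_complex /= oppr0 !eqxx. Qed.
Theorem corollary2 (R : realType) (n : nat) (e : 'I_n.-1 -> 'I_n * 'I_n)
  (w : 'I_n.-1 -> R) (eps : 'I_n -> R) (sw sv : R) :
  (2 <= n)%N ->
  is_tree e ->
  (forall l, 0 < w l) ->
  (forall i, 0 < eps i) ->
  (hinf_norm (Sigma_tau e w eps sw sv) * hinf_norm (Sigma_tau e w eps sw sv))%E
    = (sigma_bar (cmx (sw ^+ 2 *: invmx (diagm w *m edge_lap e eps *m diagm w)
                       + sv ^+ 2 *: diag_inv w)))%:E
  /\
  (hinf_norm (Pi_tau e w eps sw sv) * hinf_norm (Pi_tau e w eps sw sv))%E
    = (sw ^+ 2 * sigma_bar (cmx (invmx (diag_sqrt w *m edge_lap e eps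
                                        *m diag_sqrt w)))
       + sv ^+ 2)%:E.
Proof.
move=> n2 tr wpos epos.
have Np : (0 < n.-1)%N by lia.
have NNp : (0 < n + n.-1)%N by lia.
have [Wtr Whtr Witr _] := diag_tr w.
have [_ _ Eitr Ehtr] := diag_tr eps.
have [hWhWh _ hWWi hWhWhi] := diag_facts wpos.
have [_ hEhEh _ hEsEh] := diag_facts epos.
have [Wu hWi] := unit_inv_eq hWWi.
have [Whu _] := unit_inv_eq hWhWhi.
have [_ Ehu] := mulmx1_unit hEsEh.
set (D := incidence R e) in *.
set (L := edge_lap e eps) in *.
set (W := diagm w) in *. set (Wh := diag_sqrt w) in *. set (Wi := diag_inv w) in *.
set (Eh := diag_invsqrt eps) in *. set (Ei := diag_inv eps) in *.
have hEE : Eh *m Eh^T = Ei by rewrite Ehtr hEhEh.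
have hWW : Wh *m Wh^T = W by rewrite Whtr hWhWh.
have Ltr : L^T = L by rewrite /L /edge_lap !trmx_mul trmxK Eitr mulmxA.
have LF : L = (D^T *m Eh) *m (D^T *m Eh)^T.
  by rewrite trmx_mul trmxK -!mulmxA (mulmxA Eh) hEE mulmxA.
have Dfree : row_free (cmx D^T) by rewrite /row_free cmx_rank; exact: tree_rank.
have Lpd : forall v : 'rV[R[i]]_n.-1, bf (cmx L) v v = 0 -> v = 0.
  move=> v; rewrite LF cmxM -ctr_cmx bf_XXH => h.
  have h0 : v *m cmx (D^T *m Eh) = 0.
    apply/eqP; apply: contraT => nz; have := hf_gt0 nz; rewrite h ltxx //.
  move: h0; rewrite cmxM mulmxA => /eqP.
  rewrite mulmx_free_eq0; last by rewrite row_free_unit cmx_unit.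
  by rewrite mulmx_free_eq0 // => /eqP.
set K := row_mx (sw *: (D^T *m Eh)) ((-sv) *: (L *m Wh)).
have SigE : forall s, Sigma_tau e w eps sw sv s = invmx (s%:M + cmx (L *m W)) *m cmx K.
  by move=> s; rewrite /Sigma_tau cmx_row.
have PiE : forall s, Pi_tau e w eps sw sv s =
    cmx Wh *m (invmx (s%:M + cmx (L *m W)) *m cmx K).
  by move=> s; rewrite /Pi_tau SigE.
have KK : K *m K^T = sw^+2 *: L + sv^+2 *: (L *m W *m L).
  by rewrite /K /L /edge_lap; apply: KKT.
have Witr' : ctr (cmx Wi) = cmx Wi by rewrite ctr_cmx Witr.
have Ltr' : ctr (cmx L) = cmx L by rewrite ctr_cmx Ltr.
have Wtr' : ctr (cmx W) = cmx W by rewrite ctr_cmx Wtr.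
have WWi : cmx W *m cmx Wi = 1%:M by rewrite -cmxM hWWi cmx_scalar.
have Munit : forall om, ((Complex 0 om)%:M + cmx (L *m W)) \in unitmx.
  move=> om; rewrite unitmxE unitfE; apply/negP => /det0P [v v0 hv].
  set s := Complex 0 om.
  have E : v *m (s%:M + cmx (L *m W)) *m cmx Wi *m ctr v =
      s *: (v *m cmx Wi *m ctr v) + v *m cmx L *m ctr v.
    rewrite mulmxDr mul_mx_scalar !mulmxDl -!scalemxAl cmxM.
    by rewrite (mulmxA v) -(mulmxA _ (cmx W)) WWi mulmx1.
  have e1 : s * bf (cmx Wi) v v + bf (cmx L) v v = 0.
    by have := congr1 (fun M : 'M_1 => M 0 0) E; rewrite hv !mul0mx entry_lin mxE => <-.
  have e2 : - s * bf (cmx Wi) v v + bf (cmx L) v v = 0.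
    have := congr1 conjc e1; rewrite conjcD' conjcM' conj_imag.
    by rewrite -(bf_conj v v Witr') -(bf_conj v v Ltr') conjc0.
  have q2pos : 0 <= bf (cmx L) v v by rewrite LF cmxM -ctr_cmx bf_XXH hf_ge0.
  have : bf (cmx L) v v + bf (cmx L) v v = 0.
    by rewrite -[RHS](addr0 0) -{1}e1 -e2 mulNr addrACA subrr add0r.
  move/eqP; rewrite paddr_eq0 // andbb => /eqP /Lpd v00.
  by move: v0; rewrite v00 eqxx.
have M0 : (Complex 0 0)%:M + cmx (L *m W) = cmx (L *m W).
  have -> : Complex 0 0 = 0 :> R[i] by [].
  by rewrite raddf0 add0r.
have LWu : L *m W \in unitmx by rewrite -cmx_unit -M0 Munit.
have Lu : L \in unitmx by move: LWu; rewrite unitmx_mul => /andP [].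
pose Sig := fun om : R => invmx ((Complex 0 om)%:M + cmx (L *m W)) *m cmx K.
have G_eq : cmx K *m ctr (cmx K) =
    ((sw^+2)%:C)%C *: cmx L + ((sv^+2)%:C)%C *: (cmx L *m cmx W *m cmx L).
  by rewrite ctr_cmx -cmxM KK cmxD !cmxZ !cmxM.
have hmono : forall om x, bf (Sig om *m ctr (Sig om)) x x <= bf (Sig 0 *m ctr (Sig 0)) x x.
  have bfS : forall om' x', bf (Sig om' *m ctr (Sig om')) x' x' =
      bf (cmx K *m ctr (cmx K)) (x' *m invmx ((Complex 0 om')%:M + cmx (L *m W)))
         (x' *m invmx ((Complex 0 om')%:M + cmx (L *m W))).
    by move=> om' x'; rewrite bf_XXH bf_XXH /Sig mulmxA.
  move=> om x.
  have h1 := bfS om x.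
  have h2 := bfS 0 x.
  rewrite [X in X <= _]h1 [X in _ <= X]h2.
  apply: (@key_ineq R _ (cmx L) (cmx W) _ (sw^+2) (sv^+2) om).
  - exact: Ltr'.
  - exact: Wtr'.
  - by rewrite cmx_unit.
  - exact: G_eq.
  - exact: ctr_XXH.
  - by move=> z; rewrite bf_XXH; apply: hf_ge0.
  rewrite -cmxM M0 mulmxKV; last exact: Munit.
  by rewrite mulmxKV // cmx_unit.
have SigE' : forall om, Sigma_tau e w eps sw sv (Complex 0 om) = Sig om.
  by move=> om; rewrite SigE.
have PiE' : forall om, Pi_tau e w eps sw sv (Complex 0 om) = cmx Wh *m Sig om.
  by move=> om; rewrite PiE.
have Sig0E : Sig 0 = invmx (cmx (L *m W)) *m cmx K by rewrite /Sig M0.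
clearbody Sig.
have lamS : forall om, lam (ctr (Sig om) *m Sig om) <= lam (ctr (Sig 0) *m Sig 0).
  move=> om; rewrite (lam_AHA (Sig om) Np NNp) (lam_AHA (Sig 0) Np NNp).
  exact: (lam_le Np (ctr_XXH _) (ctr_XXH _) (hmono om)).
have lamP : forall om, lam (ctr (cmx Wh *m Sig om) *m (cmx Wh *m Sig om)) <=
                       lam (ctr (cmx Wh *m Sig 0) *m (cmx Wh *m Sig 0)).
  move=> om; rewrite (lam_AHA (cmx Wh *m Sig om) Np NNp) (lam_AHA (cmx Wh *m Sig 0) Np NNp).
  apply: (lam_le Np (ctr_XXH _) (ctr_XXH _)) => x.
  have e3 : forall om', bf ((cmx Wh *m Sig om') *m ctr (cmx Wh *m Sig om')) x x =
     bf (Sig om' *m ctr (Sig om')) (x *m cmx Wh) (x *m cmx Wh).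
    by move=> om'; rewrite bf_XXH bf_XXH mulmxA.
  rewrite [X in X <= _]e3 [X in _ <= X]e3; exact: hmono.
have hS : hinf_norm (Sigma_tau e w eps sw sv) = (sigma_bar (Sig 0))%:E.
  rewrite hinf_max; first by rewrite SigE'.
  by move=> om; rewrite !SigE' !sigma_barE; apply: ler_wsqrtr; apply: lamS.
have hP : hinf_norm (Pi_tau e w eps sw sv) = (sigma_bar (cmx Wh *m Sig 0))%:E.
  rewrite hinf_max.
    by rewrite PiE'; reflexivity.
  move=> om.
  rewrite !PiE'.
  rewrite !sigma_barE.
  by apply: ler_wsqrtr; apply: lamP.
have EB : cmx (sw ^+ 2 *: invmx (W *m L *m W) + sv ^+ 2 *: Wi) = Sig 0 *m ctr (Sig 0).
  rewrite -(R1 (sw^+2) (sv^+2) Wu Lu (esym hWi) Ltr Wtr) -KK Sig0E.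
  rewrite ctrM ctr_inv !ctr_cmx trmx_inv !cmxM !cmx_inv !cmxM !mulmxA.
  reflexivity.
have psd0 : forall x, 0 <= bf (Sig 0 *m ctr (Sig 0)) x x.
  by move=> x; rewrite bf_XXH; apply: hf_ge0.
have l0 : 0 <= lam (Sig 0 *m ctr (Sig 0)) by apply: (lam_ge0 Np (ctr_XXH _) psd0).
split.
  rewrite hS -EFinM.
  rewrite EB (sigma_bar_psd Np (ctr_XXH _) psd0) sigma_barE (lam_AHA (Sig 0) Np NNp).
  by rewrite -expr2 sqr_sqrtr.
rewrite hP -EFinM.
set S := Wh *m L *m Wh.
have Su : S \in unitmx by rewrite /S !unitmx_mul Whu Lu.
have Str : (invmx S)^T = invmx S.
  by rewrite trmx_inv /S trmx_mul (trmx_mul Wh L) Whtr Ltr mulmxA.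
have SiH : ctr (cmx (invmx S)) = cmx (invmx S) by rewrite ctr_cmx Str.
have EP : (cmx Wh *m Sig 0) *m ctr (cmx Wh *m Sig 0) =
    ((sw^+2)%:C)%C *: cmx (invmx S) + (((sv^+2)%:C)%C)%:M.
  rewrite ctrM !mulmxA -(mulmxA (cmx Wh) (Sig 0)) -EB ctr_cmx -!cmxM.
  by rewrite (R2 (sw^+2) (sv^+2) Whu Lu hWhWh (esym hWi) Whtr) cmxD cmxZ cmx_scalar.
have psdS : forall x, 0 <= bf (cmx (invmx S)) x x.
  set F := Wh *m (D^T *m Eh).
  have SF : invmx S = (invmx S *m F) *m (invmx S *m F)^T.
    rewrite trmx_mul Str -mulmxA (mulmxA F) /F (trmx_mul Wh) Whtr.
    by rewrite (mulmxA (Wh *m (D^T *m Eh))) -(mulmxA Wh) -LF -/S (mulmxV Su) mulmx1.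
  by move=> x; rewrite SF cmxM -ctr_cmx bf_XXH; apply: hf_ge0.
have psdP : forall x, 0 <= bf ((cmx Wh *m Sig 0) *m ctr (cmx Wh *m Sig 0)) x x.
  by move=> x; rewrite bf_XXH; apply: hf_ge0.
have lP0 : 0 <= lam ((cmx Wh *m Sig 0) *m ctr (cmx Wh *m Sig 0)).
  exact: (lam_ge0 Np (ctr_XXH _) psdP).
rewrite sigma_barE (lam_AHA (cmx Wh *m Sig 0) Np NNp) -expr2 sqr_sqrtr; last exact: lP0.
rewrite EP (lam_affine _ Np SiH); last exact: sqr_ge0.
by rewrite (sigma_bar_psd Np SiH psdS).
Qed.
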